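(* Let $K\ge L\ge T\ge 2$ be integers, let $\kappa,\lambda$ be the smallest non-negative integers such that $K+1+\kappa$ and $L+1+\lambda$ are coprime to $T-1$, and put $K^\star=K+1+\kappa$, $L^\star=L+1+\lambda$, $\bar T=T-1$, $q=K^\star L^\star+\bar T^2$. Let $x$ be a positive integer coprime to $q$ and $y\in\{0,\dots,q-1\}$ the unique integer with $x\bar T+yK^\star\equiv 0\pmod q$. Then the only integer solutions $(i,j)$ of $ix\equiv jy\pmod q$ with $-L\le i\le T+L-1$ and $-K-T+1\le j\le K-1$ are (possibly) $(0,0)$, $(L^\star,\bar T)$ and $(\bar T,-K^\star)$. *)

(* Defs.v *)
From mathcomp Require Import all_boot all_algebra.
Set Implicit Arguments. Unset Strict Implicit. Unset Printing Implicit Defensive.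

Definition least_coprime_shift (m d k : nat) : Prop :=
  coprime (m + k) d /\ (forall k', (k' < k)%N -> ~~ coprime (m + k') d).

(* Main.v *)
Require Import Defs.
From mathcomp Require Import all_boot all_algebra.
From mathcomp Require Import zify ring lra.
Import GRing.Theory Num.Theory.
Local Open Scope ring_scope.

Lemma mL1 (v u : int) : u <= -1 -> 0 <= v -> u * v <= - v.
Proof. move=> h1 h2; nia. Qed.
Lemma mL2 (v u : int) : 2 <= u -> 0 <= v -> 2 * v <= u * v.
Proof. move=> h1 h2; nia. Qed.
Lemma mL3 (v u : int) : u <= -2 -> 0 <= v -> u * v <= - 2 * v.
Proof. move=> h1 h2; nia. Qed.
Lemma mL4 (v u : int) : 1 <= u -> 0 <= v -> v <= u * v.
Proof. move=> h1 h2; nia. Qed.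
Lemma keyL (a m Ks Ls Tb K L T : int) :
  K + 1 <= Ks -> L + 1 <= Ls -> Tb + 1 = T -> 2 <= T -> T <= L -> L <= K ->
  - L <= a * Ls - m * Tb -> a * Ls - m * Tb <= T + L - 1 ->
  - K - T + 1 <= m * Ks + a * Tb -> m * Ks + a * Tb <= K - 1 ->
  (a = 0 /\ m = 0) \/ (a = 1 /\ m = 0) \/ (a = 0 /\ m = -1).
Proof.
move=> h1 h2 h3 h4 h5 h6 hi1 hi2 hj1 hj2.
have gL : 0 <= Ls by lia.
have gT : 0 <= Tb by lia.
have gK : 0 <= Ks by lia.
have [ha1|[ha1|[ha1|ha1]]] : a <= -1 \/ a = 0 \/ a = 1 \/ 2 <= a by lia.
all: have [hm1|[hm1|[hm1|hm1]]] : m <= -2 \/ m = -1 \/ m = 0 \/ 1 <= m by lia.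
all: try (rewrite ?ha1 ?hm1 in hi1 hi2 hj1 hj2).
all: try (have := @mL1 _ _ ha1 gL; have := @mL1 _ _ ha1 gT).
all: try (have := @mL2 _ _ ha1 gL; have := @mL2 _ _ ha1 gT).
all: try (have := @mL3 _ _ hm1 gK; have := @mL3 _ _ hm1 gT).
all: try (have := @mL4 _ _ hm1 gK; have := @mL4 _ _ hm1 gT).
all: try (have := @mL1 _ _ hm1 gK; have := @mL1 _ _ hm1 gT).
all: move: hi1 hi2 hj1 hj2.
all: generalize (a * Ls) (a * Tb) (m * Ks) (m * Tb).
all: move=> *.
all: lia.
Qed.


Theorem lemma6 (K L T kappa lambda x y : nat) :
  (2 <= T)%N -> (T <= L)%N -> (L <= K)%N ->
  least_coprime_shift K.+1 T.-1 kappa ->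
  least_coprime_shift L.+1 T.-1 lambda ->
  let Ks := (K.+1 + kappa)%N in
  let Ls := (L.+1 + lambda)%N in
  let Tb := T.-1 in
  let q := (Ks * Ls + Tb ^ 2)%N in
  (0 < x)%N -> coprime x q ->
  (y < q)%N -> (x * Tb + y * Ks = 0 %[mod q])%N ->
  forall i j : int,
    - (L%:Z) <= i <= (T + L)%:Z - 1 ->
    - (K%:Z) - T%:Z + 1 <= j <= K%:Z - 1 ->
    (i * x%:Z = j * y%:Z %[mod q%:Z])%Z ->
    (i, j) = (0, 0) \/ (i, j) = (Ls%:Z, Tb%:Z) \/ (i, j) = (Tb%:Z, - Ks%:Z).
Proof.
move=> hT hTL hLK [cK _] _ Ks Ls Tb q hx cxq hy hmod i j /andP[hi1 hi2] /andP[hj1 hj2] hij.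
have [c hc] : exists c : nat, (x * Tb + y * Ks = c * q)%N.
  exists ((x * Tb + y * Ks) %/ q)%N; rewrite {1}(divn_eq (x * Tb + y * Ks) q) hmod mod0n addn0 //.
have [e he] : exists e : int, i * x%:Z - j * y%:Z = e * q%:Z.
  by apply/dvdzP; rewrite -eqz_mod_dvd; apply/eqP.
have hcZ : (x%:Z * Tb%:Z + y%:Z * Ks%:Z = c%:Z * q%:Z).
  by rewrite -!PoszM -PoszD hc.
have hq : (q%:Z %| x%:Z * (i * Ks%:Z + j * Tb%:Z))%Z.
  apply/dvdzP; exists (j * c%:Z + e * Ks%:Z).
  have -> : x%:Z * (i * Ks%:Z + j * Tb%:Z) = (i * x%:Z - j * y%:Z) * Ks%:Z + j * (x%:Z * Tb%:Z + y%:Z * Ks%:Z).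
    by ring.
  rewrite he hcZ; ring.
rewrite Gauss_dvdzr ?coprimezE ?absz_nat 1?coprime_sym // in hq.
have [a ha] := dvdzP hq.
have hk : (Ks%:Z %| (j - a * Tb%:Z) * Tb%:Z)%Z.
  apply/dvdzP; exists (a * Ls%:Z - i).
  have hqZ : q%:Z = Ks%:Z * Ls%:Z + Tb%:Z * Tb%:Z by rewrite /q -!PoszM -PoszD expnS expn1.
  rewrite hqZ in ha.
  have : (j - a * Tb%:Z) * Tb%:Z = a * (Ks%:Z * Ls%:Z + Tb%:Z * Tb%:Z) - i * Ks%:Z - a * Tb%:Z * Tb%:Z by rewrite -ha; ring.
  move=> ->; ring.
rewrite Gauss_dvdzl ?coprimezE ?absz_nat // in hk.
have [m hm] := dvdzP hk.
have hKs : (0 < Ks)%N by [].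
have hi : i = a * Ls%:Z - m * Tb%:Z.
  have hqZ : q%:Z = Ks%:Z * Ls%:Z + Tb%:Z * Tb%:Z by rewrite /q -!PoszM -PoszD expnS expn1.
  rewrite hqZ in ha.
  have h2 : (i - a * Ls%:Z + m * Tb%:Z) * Ks%:Z = 0.
    have hj : j = m * Ks%:Z + a * Tb%:Z by rewrite -hm; ring.
    rewrite hj in ha. rewrite mulrDl mulrBl. rewrite -[X in _ = X](subrr (a * (Ks%:Z * Ls%:Z + Tb%:Z * Tb%:Z))).
    rewrite -{1}ha; ring.
  move/eqP: h2; rewrite mulf_eq0 => /orP[/eqP h|]; last by rewrite eqz_nat; case: (Ks) hKs.
  by rewrite -(subr0 i) -h; ring.
have hj : j = m * Ks%:Z + a * Tb%:Z by rewrite -hm; ring.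
have hKs1 : (K.+1 <= Ks)%N by rewrite /Ks leq_addr.
have hLs1 : (L.+1 <= Ls)%N by rewrite /Ls leq_addr.
have hTb : (Tb.+1 = T)%N by rewrite /Tb prednK // ltnW.
have key : (a = 0 /\ m = 0) \/ (a = 1 /\ m = 0) \/ (a = 0 /\ m = -1).
  rewrite hi hj in hi1 hi2 hj1 hj2.
  clearbody Ks Ls Tb q.
  move: hi1 hi2 hj1 hj2 hKs1 hLs1 hTb hT hTL hLK.
  clear.
  move=> hi1 hi2 hj1 hj2 hKs1 hLs1 hTb hT hTL hLK.
  apply: (@keyL a m Ks Ls Tb K L T).
  - by clear -hKs1; lia.
  - by clear -hLs1; lia.
  - by clear -hTb; lia.
  - by clear -hT; lia.
  - by clear -hTL; lia.
  - by clear -hLK; lia.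
  - exact: hi1.
  - by rewrite -PoszD.
  - exact: hj1.
  - exact: hj2.
rewrite hi hj; case: key => [[-> ->]|[[-> ->]|[-> ->]]].
- by left; congr pair; ring.
- by right; left; congr pair; ring.
- by right; right; congr pair; ring.
Qed.
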